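(* Let $\mathcal C$ be a $\tau$-graded category with shifts and let $S$ be a homogeneous simple object. Put $L_S=\{a\in H: S\langle a\rangle\cong S \text{ (via a degree-1 isomorphism)}\}$. Then $L_S$ is a subgroup of $\ker(\tau)$. Fix coset representatives $(h_i)_{i\in I}$ with $H=\coprod_{i\in I}h_iL_S$, and let $H$ act on $I$ by $h_{ai}L_S=ah_iL_S$. For all $i\in I$, $a\in H$ the $R$-module $\mathrm{Hom}^a_{\mathcal C}(S\langle h_i\rangle,S\langle h_{ai}\rangle)$ is free of rank one; choose generators $f^a_{S,i}$ with $f^1_{S,i}=\mathrm{id}_{S\langle h_i\rangle}$. Then there is a unique function $\psi_S\colon H^2\to\mathrm{Hom}_{\mathrm{Set}}(H/L_S,R^\times)$ with $$f^{ab}_{S,i}=\psi_S(a,b)(h_iL_S)\cdot f^a_{S,bi}\circ f^b_{S,i}\quad\text{for all }a,b\in H,\ i\in I,$$ and $\psi_S$ is a normalised 2-cocycle.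
   Context: $R$ is a nonzero commutative ring, $H,G$ groups, $\tau\colon H\to G$ a homomorphism. A $\tau$-graded category is an $R$-linear category $\mathcal C$ with $\mathrm{Hom}(X,Y)=\bigoplus_{h\in H}\mathrm{Hom}^h(X,Y)$, identities of degree 1, composition $\mathrm{Hom}^{h'}\times\mathrm{Hom}^h\to\mathrm{Hom}^{h'h}$, such that the degree-1 subcategory $\mathcal C^1$ is $G$-graded (disjoint full subcategories $\mathcal C_g$, every object a finite direct sum of objects of the $\mathcal C_g$; objects of $\mathcal C_g$ are homogeneous, $|X|=g$) and $\mathrm{Hom}^h(X,Y)=0$ for homogeneous $X,Y$ unless $|Y|=\tau(h)|X|$. A shift of $X$ by $a\in H$ is an object $X\langle a\rangle$ with a degree-$a$ isomorphism $r_{X,a}\colon X\to X\langle a\rangle$; $\mathcal C$ has shifts if these exist for all $X,a$ (fix a choice). An object $S$ is simple if $\mathrm{End}_{\mathcal C^1}(S)\cong R$ as $R$-algebras. $\mathrm{Hom}_{\mathrm{Set}}(H/L,R^\times)$ is an abelian group under pointwise product with right $H$-action $(f\triangleleft h)(kL)=f(hkL)$; $1$ is the constant function; a normalised 2-cocycle is $\psi\colon H^2\to\mathrm{Hom}_{\mathrm{Set}}(H/L,R^\times)$ with $\psi(1,h)=\psi(h,1)=1$ and $\psi(b,c)\psi(ab,c)^{-1}\psi(a,bc)(\psi(a,b)\triangleleft c)^{-1}=1$. *)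

(* Defs.v *)
From HB Require Import structures.
From mathcomp Require Import all_boot all_algebra.
From Stdlib Require Import JMeq. From Stdlib Require List.
Set Implicit Arguments. Unset Strict Implicit. Unset Printing Implicit Defensive.
Import GRing.Theory.
Local Open Scope ring_scope.

Record group := Group {
  gcar :> Type;
  gmul : gcar -> gcar -> gcar;
  gone : gcar;
  ginv : gcar -> gcar;
  gmulA : forall x y z, gmul x (gmul y z) = gmul (gmul x y) z;
  gmul1x : forall x, gmul gone x = x;
  gmulx1 : forall x, gmul x gone = x;
  gmulVx : forall x, gmul (ginv x) x = gone;
  gmulxV : forall x, gmul x (ginv x) = gone }.
Arguments gmul {g}. Arguments gone {g}. Arguments ginv {g}.

Definition is_group_hom (H G : group) (tau : H -> G) :=
  forall a b, tau (gmul a b) = gmul (tau a) (tau b).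

(* Mor X Y is the full R-module of morphisms; [homdeg h f] says that
   f lies in the homogeneous component Mor^h(X,Y);
   [grade X = Some g] says X is an object of C_g (homogeneous, |X| = g). *)
Record tgcat (R : comUnitRingType) (H G : group) (tau : H -> G) := TGCat {
  Obj : Type;
  Mor : Obj -> Obj -> lmodType R;
  mcomp : forall X Y Z, Mor Y Z -> Mor X Y -> Mor X Z;
  idm : forall X, Mor X X;
  homdeg : forall X Y, H -> Mor X Y -> Prop;
  grade : Obj -> option G;
  shift : Obj -> H -> Obj;
  rsh : forall X a, Mor X (shift X a);
  comp_linl : forall X Y Z (f : Mor X Y) (r : R) (g1 g2 : Mor Y Z),
      mcomp (r *: g1 + g2) f = r *: mcomp g1 f + mcomp g2 f;
  comp_linr : forall X Y Z (g : Mor Y Z) (r : R) (f1 f2 : Mor X Y),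
      mcomp g (r *: f1 + f2) = r *: mcomp g f1 + mcomp g f2;
  compA : forall X Y Z W (f : Mor X Y) (g : Mor Y Z) (k : Mor Z W),
      mcomp k (mcomp g f) = mcomp (mcomp k g) f;
  comp1f : forall X Y (f : Mor X Y), mcomp (idm Y) f = f;
  compf1 : forall X Y (f : Mor X Y), mcomp f (idm X) = f;
  (* Mor(X,Y) = (+)_h Mor^h(X,Y) as R-modules *)
  homdeg0 : forall X Y h, homdeg h (0 : Mor X Y);
  homdeg_lin : forall X Y h (r : R) (f g : Mor X Y),
      homdeg h f -> homdeg h g -> homdeg h (r *: f + g);
  homdeg_span : forall X Y (f : Mor X Y), exists s : seq (H * Mor X Y)%type,
      (forall p, List.In p s -> homdeg p.1 p.2) /\ f = \sum_(p <- s) p.2;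
  homdeg_indep : forall X Y (s : seq (H * Mor X Y)%type),
      List.NoDup (map fst s) -> (forall p, List.In p s -> homdeg p.1 p.2) ->
      \sum_(p <- s) p.2 = 0 -> forall p, List.In p s -> p.2 = 0;
  idm_deg : forall X, homdeg gone (idm X);
  comp_deg : forall X Y Z h h' (f : Mor X Y) (g : Mor Y Z),
      homdeg h f -> homdeg h' g -> homdeg (gmul h' h) (mcomp g f);
  (* C^1 is G-graded: every object is a finite direct sum (in C^1)
     of homogeneous objects *)
  grade_decomp : forall X, exists n (Y : 'I_n -> Obj)
      (i : forall k, Mor (Y k) X) (p : forall k, Mor X (Y k)),
      [/\ forall k, grade (Y k) <> None,
          forall k, homdeg gone (i k) /\ homdeg gone (p k),
          forall k, mcomp (p k) (i k) = idm (Y k),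
          forall k l, k <> l -> mcomp (p k) (i l) = 0
        & \sum_(k < n) mcomp (i k) (p k) = idm X];
  grade_hom : forall X Y g g' h (f : Mor X Y),
      grade X = Some g -> grade Y = Some g' -> homdeg h f ->
      g' <> gmul (tau h) g -> f = 0;
  rsh_deg : forall X a, homdeg a (rsh X a);
  rsh_iso : forall X a, exists g : Mor (shift X a) X,
      mcomp g (rsh X a) = idm X /\ mcomp (rsh X a) g = idm (shift X a) }.

Arguments tgcat : clear implicits.
Arguments Obj {R H G tau}.
Arguments Mor {R H G tau} t.
Arguments mcomp {R H G tau} t {X Y Z}.
Arguments idm {R H G tau} t X.
Arguments homdeg {R H G tau} t {X Y}.
Arguments grade {R H G tau} t.
Arguments shift {R H G tau} t.
Arguments rsh {R H G tau} t.

Section Defs.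
Variables (R : comUnitRingType) (H G : group) (tau : H -> G)
          (C : tgcat R H G tau).

Definition deg_iso (h : H) (X Y : Obj C) :=
  exists (f : Mor C X Y) (g : Mor C Y X),
    [/\ homdeg C h f, mcomp C g f = idm C X & mcomp C f g = idm C Y].

(* End_{C^1}(S) is isomorphic to R as R-algebras *)
Definition simple (S : Obj C) :=
  exists phi : Mor C S S -> R,
    [/\ forall (r : R) (f g : Mor C S S), homdeg C gone f -> homdeg C gone g ->
          phi (r *: f + g) = r * phi f + phi g,
        forall f g : Mor C S S, homdeg C gone f -> homdeg C gone g ->
          phi (mcomp C f g) = phi f * phi g,
        phi (idm C S) = 1,
        forall f g : Mor C S S, homdeg C gone f -> homdeg C gone g ->
          phi f = phi g -> f = g
      & forall r : R, exists2 f, homdeg C gone f & phi f = r].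

Definition homogeneous (S : Obj C) := exists g, grade C S = Some g.

Definition LS (S : Obj C) (a : H) : Prop := deg_iso gone (shift C S a) S.

Definition subgroup_of_ker (L : H -> Prop) :=
  [/\ L gone, forall a b, L a -> L b -> L (gmul a b),
      forall a, L a -> L (ginv a) & forall a, L a -> tau a = gone].

Definition free_rank1 (X Y : Obj C) (P : Mor C X Y -> Prop) :=
  exists b, P b /\ forall x, P x -> exists! r : R, x = r *: b.

Definition generates (X Y : Obj C) (P : Mor C X Y -> Prop) (b : Mor C X Y) :=
  P b /\ forall x, P x -> exists r : R, x = r *: b.
End Defs.

(* elements of Hom_Set(H/L, R^x), represented as L-right-invariant maps H -> R
   (f(k l) = f(k) for l in L, i.e. functions on left cosets kL) with unit values *)
Definition coset_unit_fun (R : comUnitRingType) (H : group) (L : H -> Prop)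
  (u : H -> R) :=
  (forall k l, L l -> u (gmul k l) = u k) /\ (forall k, u k \is a GRing.unit).

(* normalised 2-cocycle H^2 -> Hom_Set(H/L, R^x), right action (f<|h)(kL)=f(hkL) *)
Definition normalised_cocycle (R : comUnitRingType) (H : group)
  (psi : H -> H -> H -> R) :=
  [/\ forall h k, psi gone h k = 1, forall h k, psi h gone k = 1
    & forall a b c k, psi b c k * (psi (gmul a b) c k)^-1 * psi a (gmul b c) k
                        * (psi a b (gmul c k))^-1 = 1].

(* Main.v *)
Require Import Defs.
From HB Require Import structures.
From mathcomp Require Import all_boot all_algebra.
From Stdlib Require Import JMeq. From Stdlib Require List.
From Stdlib Require Import Classical ClassicalEpsilon.
Import GRing.Theory.
Local Open Scope ring_scope.
Set Implicit Arguments. Unset Strict Implicit. Unset Printing Implicit Defensive.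

Section GroupLemmas.
Variable K : group.
Implicit Types x y : K.
Lemma mulKg x y : gmul (ginv x) (gmul x y) = y.
Proof. by rewrite gmulA gmulVx gmul1x. Qed.
Lemma mulKVg x y : gmul x (gmul (ginv x) y) = y.
Proof. by rewrite gmulA gmulxV gmul1x. Qed.
Lemma mulgK x y : gmul (gmul y x) (ginv x) = y.
Proof. by rewrite -gmulA gmulxV gmulx1. Qed.
Lemma mulgKV x y : gmul (gmul y (ginv x)) x = y.
Proof. by rewrite -gmulA gmulVx gmulx1. Qed.
Lemma inv_uniq x y : gmul x y = gone -> ginv x = y.
Proof. by move=> E; rewrite -(mulKg x y) E gmulx1. Qed.
Lemma ginv_mul x y : ginv (gmul x y) = gmul (ginv y) (ginv x).
Proof. by apply: inv_uniq; rewrite gmulA mulgK gmulxV. Qed.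
Lemma ginvK x : ginv (ginv x) = x.
Proof. by apply: inv_uniq; rewrite gmulVx. Qed.
Lemma ginv1 : ginv (@gone K) = gone.
Proof. by apply: inv_uniq; rewrite gmul1x. Qed.
Lemma mul_cancel x y : gmul x y = y -> x = gone.
Proof. by move=> E; rewrite -(mulgK y x) E gmulxV. Qed.
End GroupLemmas.

Section Cat.
Variables (R : comUnitRingType) (H G : group) (tau : H -> G)
  (C : tgcat R H G tau).
Local Notation comp := (mcomp C).
Local Notation hd := (homdeg C).

Lemma comp0r X Y Z (g : Mor C Y Z) : comp g (0 : Mor C X Y) = 0.
Proof.
have := comp_linr g 1 (0 : Mor C X Y) 0; rewrite !scale1r addr0 => E.
by apply: (@addrI _ (comp g 0)); rewrite addr0 -E.
Qed.
Lemma comp0l X Y Z (f : Mor C X Y) : comp (0 : Mor C Y Z) f = 0.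
Proof.
have := comp_linl f 1 (0 : Mor C Y Z) 0; rewrite !scale1r addr0 => E.
by apply: (@addrI _ (comp 0 f)); rewrite addr0 -E.
Qed.
Lemma compDr X Y Z (g : Mor C Y Z) (f1 f2 : Mor C X Y) :
  comp g (f1 + f2) = comp g f1 + comp g f2.
Proof. by have := comp_linr g 1 f1 f2; rewrite !scale1r. Qed.
Lemma compDl X Y Z (f : Mor C X Y) (g1 g2 : Mor C Y Z) :
  comp (g1 + g2) f = comp g1 f + comp g2 f.
Proof. by have := comp_linl f 1 g1 g2; rewrite !scale1r. Qed.
Lemma compZr X Y Z (g : Mor C Y Z) r (f : Mor C X Y) :
  comp g (r *: f) = r *: comp g f.
Proof. by have := comp_linr g r f 0; rewrite !addr0 comp0r addr0. Qed.
Lemma compZl X Y Z (f : Mor C X Y) r (g : Mor C Y Z) :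
  comp (r *: g) f = r *: comp g f.
Proof. by have := comp_linl f r g 0; rewrite !addr0 comp0l addr0. Qed.
Lemma comp_sumr X Y Z (g : Mor C Y Z) T (s : seq T) (P : pred T) (F : T -> Mor C X Y) :
  comp g (\sum_(t <- s | P t) F t) = \sum_(t <- s | P t) comp g (F t).
Proof. by apply: (big_morph (comp g)); [exact: compDr | exact: comp0r]. Qed.

Lemma hdZ X Y h r (f : Mor C X Y) : hd h f -> hd h (r *: f).
Proof. by move=> hf; have := homdeg_lin r hf (homdeg0 _ _ h); rewrite addr0. Qed.
Lemma hdD X Y h (f g : Mor C X Y) : hd h f -> hd h g -> hd h (f + g).
Proof. by move=> hf hg; have := homdeg_lin 1 hf hg; rewrite scale1r. Qed.

Lemma In_map_fst (T1 T2 : Type) (x : T1) (s : seq (T1 * T2)) :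
  List.In x (map fst s) -> exists q, List.In q s /\ q.1 = x.
Proof.
elim: s => [|a s IH] //= [<-|/IH [q [hq eq]]]; first by exists a; split => //; left.
by exists q; split => //; right.
Qed.
Lemma In_map (T1 T2 : Type) (f : T1 -> T2) y (s : seq T1) :
  List.In y (map f s) -> exists x, List.In x s /\ y = f x.
Proof.
elim: s => [|a s IH] //= [<-|/IH [q [hq eq]]]; first by exists a; split => //; left.
by exists q; split => //; right.
Qed.
Lemma In_filter (T : Type) (P : pred T) x (s : seq T) :
  List.In x (filter P s) -> List.In x s /\ P x.
Proof.
elim: s => [|a s IH] //=; case: ifP => Pa /=.
  by case=> [<-|/IH [? ?]]; split => //; [left | right].
by move/IH => [? ?]; split => //; right.
Qed.

Definition dec (P : Prop) : bool :=
  if excluded_middle_informative P then true else false.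
Lemma decP P : reflect P (dec P).
Proof. by rewrite /dec; case: excluded_middle_informative => ?; constructor. Qed.

Lemma group_sum X Y (s : seq (H * Mor C X Y)) :
  (forall p, List.In p s -> hd p.1 p.2) ->
  exists s', [/\ List.NoDup (map fst s'),
    forall p, List.In p s' -> hd p.1 p.2 /\ List.In p.1 (map fst s)
  & \sum_(p <- s') p.2 = \sum_(p <- s) p.2].
Proof.
elim: s => [|p s IH] hs.
  by exists [::]; split => //; constructor.
have [s' [nd hs' sum']] := IH (fun q hq => hs q (or_intror hq)).
case: (classic (exists q, List.In q s' /\ q.1 = p.1)) => [[q [inq eq]]|nq].
- have [l1 [l2 E]] := List.in_split q s' inq.
  exists (l1 ++ (q.1, q.2 + p.2) :: l2); split.
  + by move: nd; rewrite E !map_cat.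
  + move=> r /List.in_app_iff [rin|[<-|rin]].
    * have := hs' r; rewrite E => /(_ (List.in_or_app _ _ _ (or_introl rin))).
      by case=> h1 h2; split => //; right.
    * split => /=; last by right; exact: (hs' q inq).2.
      apply: hdD; first exact: (hs' q inq).1.
      by rewrite eq; exact: hs p (or_introl erefl).
    * have := hs' r; rewrite E.
      move=> /(_ (List.in_or_app l1 (q :: l2) r (or_intror (or_intror rin)))).
      by case=> h1 h2; split => //; right.
  + rewrite big_cons -sum' E !big_cat !big_cons /=.
    by rewrite [p.2 + _]addrCA [q.2 + p.2]addrC -addrA.
- exists (p :: s'); split.
  + rewrite /=; constructor => // inp.
    have [q [inq eq]] := In_map_fst inp; apply: nq; by exists q.
  + move=> r /= [<-|rin]; first by split; [exact: hs p (or_introl erefl) | left].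
    by have [? ?] := hs' r rin; split => //; right.
  + by rewrite !big_cons sum'.
Qed.

Lemma zero_of X Y c (x : Mor C X Y) (s : seq (H * Mor C X Y)) :
  hd c x -> (forall p, List.In p s -> hd p.1 p.2 /\ p.1 <> c) ->
  x = \sum_(p <- s) p.2 -> x = 0.
Proof.
move=> hx hs E.
have [s' [nd hs' sum']] := group_sum (fun p hp => (hs p hp).1).
have H0 : (c, -x).2 = 0.
  apply: (homdeg_indep (s := (c,-x) :: s')); last by left.
  - rewrite /=; constructor => // inc.
    have [q [inq eq]] := In_map_fst inc.
    have [_ inq1] := hs' q inq; rewrite eq in inq1.
    have [p [inp eqp]] := In_map_fst inq1.
    by have [_ ] := hs p inp; rewrite eqp.
  - move=> p /= [<-|pin]; last exact: (hs' p pin).1.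
    by rewrite /= -scaleN1r; exact: hdZ.
  - by rewrite big_cons /= sum' -E addNr.
by move: H0 => /= /eqP; rewrite oppr_eq0 => /eqP.
Qed.

Lemma inv_hd X Y d (e : Mor C X Y) (g : Mor C Y X) : hd d e ->
  comp g e = idm C X -> comp e g = idm C Y -> hd (ginv d) g.
Proof.
move=> he ge eg.
have [s [hs Eg]] := homdeg_span g.
set g1 := \sum_(p <- s | dec (p.1 = ginv d)) p.2.
set g2 := \sum_(p <- s | ~~ dec (p.1 = ginv d)) p.2.
have Eg12 : g = g1 + g2 by rewrite Eg (bigID (fun p => dec (p.1 = ginv d))).
have hg1 : hd (ginv d) g1.
  rewrite /g1; clear Eg Eg12 g1 g2; elim: s hs => [|p s IH] hs.
    by rewrite big_nil; exact: homdeg0.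
  rewrite big_cons; case: decP => [eqp|_].
    apply: hdD; last by apply: IH => q hq; apply: hs; right.
    by rewrite -eqp; exact: hs p (or_introl erefl).
  by apply: IH => q hq; apply: hs; right.
have he2 : comp e g2 = 0.
  apply: (zero_of (c:=gone)
    (s := map (fun p => (gmul d p.1, comp e p.2)) [seq p <- s | ~~ dec (p.1 = ginv d)])).
  - have -> : comp e g2 = (-1) *: comp e g1 + idm C Y.
      by rewrite -eg Eg12 compDr scaleN1r addKr.
    apply: homdeg_lin; last exact: idm_deg.
    by have := comp_deg hg1 he; rewrite gmulxV.
  - move=> q inq; have [p [pin ->]] := In_map inq; rewrite /=.
    have [pin' np] := In_filter pin.
    split; first exact: comp_deg (hs p pin') he.
    move=> E1; move/negP: np; apply; apply/decP; symmetry; exact: inv_uniq E1.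
  - by rewrite big_map big_filter /g2 comp_sumr.
have g20 : g2 = 0 by rewrite -[g2](comp1f) -ge -Defs.compA he2 comp0r.
by rewrite Eg12 g20 addr0.
Qed.

Definition hiso X Y d (e : Mor C X Y) := hd d e /\ exists e' : Mor C Y X,
  [/\ hd (ginv d) e', comp e' e = idm C X & comp e e' = idm C Y].

Lemma iso_hiso X Y d (e : Mor C X Y) e' : hd d e ->
  comp e' e = idm C X -> comp e e' = idm C Y -> hiso d e.
Proof. by move=> he h1 h2; split => //; exists e'; split => //; exact: inv_hd he h1 h2. Qed.

Lemma hiso_inv X Y d (e : Mor C X Y) : hiso d e ->
  exists e', [/\ hiso (ginv d) e', comp e' e = idm C X & comp e e' = idm C Y].
Proof.
case=> he [e' [he' h1 h2]]; exists e'; split => //; split => //.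
by exists e; rewrite ginvK.
Qed.

Lemma hiso_comp X Y Z d d' (e : Mor C X Y) (e' : Mor C Y Z) :
  hiso d e -> hiso d' e' -> hiso (gmul d' d) (comp e' e).
Proof.
case=> he [ei [hei h1 h2]] [he' [ei' [hei' h1' h2']]].
split; first exact: comp_deg he he'.
exists (comp ei ei'); split.
- by rewrite ginv_mul; exact: comp_deg hei' hei.
- by rewrite !Defs.compA -(Defs.compA e' ei' ei) h1' compf1 h1.
- by rewrite !Defs.compA -(Defs.compA ei e e') h2 compf1 h2'.
Qed.

Lemma hiso_rsh X a : hiso a (rsh C X a).
Proof. by have [g [h1 h2]] := rsh_iso X a; apply: iso_hiso h1 h2; exact: rsh_deg. Qed.

Lemma hiso_id X : hiso gone (idm C X).
Proof. by apply: (iso_hiso (e' := idm C X)); rewrite ?comp1f //; exact: idm_deg. Qed.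

Lemma hiso_scale X Y d (e : Mor C X Y) r : hiso d e -> r \is a GRing.unit ->
  hiso d (r *: e).
Proof.
case=> he [ei [hei h1 h2]] ur; split; first exact: hdZ.
exists (r^-1 *: ei); split; first exact: hdZ.
- by rewrite compZl compZr scalerA mulVr // scale1r.
- by rewrite compZl compZr scalerA mulrV // scale1r.
Qed.

Section Simple.
Variables (S : Obj C) (S_simple : simple S).

Lemma simple_scal (y : Mor C S S) : hd gone y -> exists! r : R, y = r *: idm C S.
Proof.
case: S_simple => phi [lin mul p1 inj _] hy.
have phi0 : phi 0 = 0.
  have := lin 1 0 0 (homdeg0 _ _ _) (homdeg0 _ _ _).
  rewrite scale1r addr0 mul1r => E.
  by apply: (@addrI _ (phi 0)); rewrite addr0 -E.
have phis r : phi (r *: idm C S) = r.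
  have := lin r (idm C S) 0 (idm_deg _) (homdeg0 _ _ _).
  by rewrite addr0 p1 mulr1 phi0 addr0.
exists (phi y); split.
  by apply: inj; [exact: hy | exact: hdZ (idm_deg _) | rewrite phis].
by move=> r' ->; rewrite phis.
Qed.

Lemma simple_id0 : idm C S <> 0.
Proof.
case: S_simple => phi [lin mul p1 inj _] E.
have phi0 : phi 0 = 0.
  have := lin 1 0 0 (homdeg0 _ _ _) (homdeg0 _ _ _).
  rewrite scale1r addr0 mul1r => E'.
  by apply: (@addrI _ (phi 0)); rewrite addr0 -E'.
by move: p1; rewrite E phi0 => /eqP; rewrite eq_sym oner_eq0.
Qed.

Lemma rank1 X Y d h (u : Mor C X S) (e : Mor C X Y) : hiso d u -> hiso h e ->
  forall y, hd h y -> exists! r : R, y = r *: e.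
Proof.
case=> hu [ui [hui uiu uui]] [he [ei [hei eie eei]]] y hy.
have hz : hd gone (comp u (comp ei (comp y ui))).
  have := comp_deg (comp_deg (comp_deg hui hy) hei) hu.
  by rewrite mulKg gmulxV.
have [r [Er uniq]] := simple_scal hz.
exists r; split.
  have w : comp ei (comp y ui) = r *: ui.
    rewrite -[LHS]comp1f -uiu -Defs.compA Er compZr.
    by rewrite compf1.
  have -> : y = comp e (comp (comp ei (comp y ui)) u).
    by rewrite !Defs.compA eei comp1f -Defs.compA uiu compf1.
  by rewrite w compZl compZr uiu compf1.
move=> r' E; apply: uniq; rewrite E compZl !compZr.
by rewrite (Defs.compA ui e ei) eie comp1f uui.
Qed.

Lemma gen_unit X Y d h (u : Mor C X S) (e : Mor C X Y) b : hiso d u -> hiso h e ->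
  generates (hd h) b -> exists c, c \is a GRing.unit /\ b = c *: e.
Proof.
move=> hu he [hb gen].
have [c [Ec _]] := rank1 hu he hb.
have [t Et] := gen e he.1.
have [r [_ ur]] := rank1 hu he he.1.
have e1 : 1 = t * c by rewrite -(ur 1) ?scale1r // -(ur (t * c)) // -scalerA -Ec.
exists c; split => //; apply/unitrPr; exists t; by rewrite mulrC.
Qed.
End Simple.

Section JM.
Variables (I : Type) (T : I -> Obj C).

Lemma JM_comp X (j j' k k' : I) (x : Mor C (T j) (T k)) (x' : Mor C (T j') (T k'))
  (y : Mor C X (T j)) (y' : Mor C X (T j')) :
  j = j' -> k = k' -> JMeq x x' -> JMeq y y' -> JMeq (comp x y) (comp x' y').
Proof. by move=> Ej Ek; subst j' k' => h1 h2; rewrite (JMeq_eq h1) (JMeq_eq h2). Qed.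

Lemma JM_scale X (k k' : I) (x : Mor C X (T k)) (x' : Mor C X (T k')) r :
  k = k' -> JMeq x x' -> JMeq (r *: x) (r *: x').
Proof. by move=> Ek; subst k' => h1; rewrite (JMeq_eq h1). Qed.

Lemma JM_idl X (j j2 : I) (x : Mor C (T j) (T j2)) (y : Mor C X (T j)) :
  j2 = j -> JMeq x (idm C (T j)) -> JMeq (comp x y) y.
Proof. by move=> E; subst j2 => h1; rewrite (JMeq_eq h1) comp1f. Qed.

Variable (act : H -> I -> I) (f : forall a i, Mor C (T i) (T (act a i))).

Lemma JM_f a j j' : j = j' -> JMeq (f a j) (f a j').
Proof. by move=> ->. Qed.

Lemma JM_idr a (j j2 : I) (x : Mor C (T j) (T j2)) :
  j2 = j -> JMeq x (idm C (T j)) -> JMeq (comp (f a j2) x) (f a j).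
Proof. by move=> E; subst j2 => h1; rewrite (JMeq_eq h1) compf1. Qed.

End JM.

Section Part1.
Variables (S : Obj C) (S_simple : simple S) (S_homog : homogeneous S).

Lemma LS_hiso a : LS S a <-> exists u : Mor C (shift C S a) S, hiso gone u.
Proof.
split.
  by case=> u [ui [hu h1 h2]]; exists u; exact: iso_hiso hu h1 h2.
by case=> u [hu [ui [_ h1 h2]]]; exists u, ui.
Qed.

Lemma rinv a : exists ri : Mor C (shift C S a) S, hiso (ginv a) ri.
Proof. by have [ri [hri _ _]] := hiso_inv (hiso_rsh S a); exists ri. Qed.

Lemma LS1 : LS S gone.
Proof. by apply/LS_hiso; have [ri hri] := rinv gone; exists ri; move: hri; rewrite ginv1. Qed.

Lemma LSM a b : LS S a -> LS S b -> LS S (gmul a b).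
Proof.
move=> /LS_hiso [u hu] /LS_hiso [v hv]; apply/LS_hiso.
have [ri hri] := rinv (gmul a b).
exists (comp u (comp (rsh C S a) (comp v (comp (rsh C S b) ri)))).
have := hiso_comp (hiso_comp (hiso_comp (hiso_comp hri (hiso_rsh S b)) hv) (hiso_rsh S a)) hu.
by rewrite ginv_mul mulKVg !gmul1x gmulxV.
Qed.

Lemma LSV a : LS S a -> LS S (ginv a).
Proof.
move=> /LS_hiso [u hu]; apply/LS_hiso.
have [ui [hui _ _]] := hiso_inv hu.
have [ri hri] := rinv a; have [ri' hri'] := rinv (ginv a).
exists (comp ri (comp ui ri')).
have := hiso_comp (hiso_comp hri' hui) hri.
by rewrite ginvK ginv1 gmul1x gmulVx.
Qed.

Lemma LStau a : LS S a -> tau a = gone.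
Proof.
move=> /LS_hiso [u hu].
case: S_homog => g Eg.
have hz := hiso_comp (hiso_rsh S a) hu; rewrite gmul1x in hz.
apply: NNPP => nt.
have z0 : comp u (rsh C S a) = 0.
  apply: (grade_hom Eg Eg hz.1) => E; apply: nt; exact: mul_cancel (esym E).
case: hz => _ [zi [_ h1 _]]; apply: (simple_id0 S_simple).
by rewrite -h1 z0 comp0r.
Qed.
End Part1.
End Cat.

Unset Implicit Arguments.

Theorem mainTheorem9 (R : comUnitRingType) (H G : group) (tau : H -> G)
  (tau_hom : is_group_hom tau) (C : tgcat R H G tau) (S : Obj C)
  (S_homog : homogeneous S) (S_simple : simple S) :
  subgroup_of_ker tau (LS S) /\
  forall (I : Type) (hr : I -> H)
    (hr_part : forall a : H, exists! i : I, LS S (gmul (ginv (hr i)) a))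
    (act : H -> I -> I)
    (act_def : forall a i, LS S (gmul (ginv (hr (act a i))) (gmul a (hr i)))),
    (forall a i, free_rank1 (homdeg C (X := shift C S (hr i))
                                      (Y := shift C S (hr (act a i))) a)) /\
    forall f : forall a i, Mor C (shift C S (hr i)) (shift C S (hr (act a i))),
      (forall a i, generates (homdeg C a) (f a i)) ->
      (forall i, JMeq (f gone i) (idm C (shift C S (hr i)))) ->
      exists psi : H -> H -> H -> R,
        [/\ forall a b, coset_unit_fun (LS S) (psi a b),
            forall a b i, JMeq (f (gmul a b) i)
                               (psi a b (hr i) *: mcomp C (f a (act b i)) (f b i)),
            forall psi' : H -> H -> H -> R,
              (forall a b, coset_unit_fun (LS S) (psi' a b)) ->
              (forall a b i, JMeq (f (gmul a b) i)
                               (psi' a b (hr i) *: mcomp C (f a (act b i)) (f b i))) ->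
              forall a b k, psi' a b k = psi a b k
          & normalised_cocycle psi].
Proof.
split.
  split; [exact: LS1 | exact: LSM | exact: LSV | exact: LStau].
move=> I hr hr_part act act_def.
pose T := fun j => shift C S (hr j).
have hr_uniq x i j : LS S (gmul (ginv (hr i)) x) -> LS S (gmul (ginv (hr j)) x) -> i = j.
  by move=> hi hj; have [i0 [_ u]] := hr_part x; rewrite -(u i hi) -(u j hj).
have act_comp a b i : act (gmul a b) i = act a (act b i).
  apply: (hr_uniq (gmul (gmul a b) (hr i))); first exact: act_def.
  have := LSM (act_def a (act b i)) (act_def b i).
  rewrite !gmulA mulgK; exact: id.
have act1 j : act gone j = j.
  apply: (hr_uniq (hr j)); first by have := act_def gone j; rewrite gmul1x.
  by rewrite gmulVx; exact: LS1.
have hu i : exists u : Mor C (T i) S, hiso (ginv (hr i)) u by exact: rinv.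
have he a i : exists e : Mor C (T i) (T (act a i)), hiso a e.
  have /LS_hiso [w hw] := act_def a i.
  have [ri hri] := rinv S (hr i).
  exists (mcomp C (rsh C S (hr (act a i))) (mcomp C w (mcomp C (rsh C S _) ri))).
  have := hiso_comp (hiso_comp (hiso_comp hri (hiso_rsh S _)) hw) (hiso_rsh S (hr (act a i))).
  by rewrite gmul1x -gmulA mulgK mulKVg.
split.
  move=> a i; have [u hu'] := hu i; have [e he'] := he a i.
  exists e; split; first exact: he'.1.
  move=> x hx; have := rank1 S_simple hu' he' hx. exact: id.
move=> f gen f1.
have hf a i : hiso a (f a i).
  have [u hu'] := hu i; have [e he'] := he a i.
  have [c [uc ->]] := gen_unit S_simple hu' he' (gen a i).
  exact: hiso_scale.
have key a b i : exists c, [/\ c \is a GRing.unit,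
    JMeq (f (gmul a b) i) (c *: mcomp C (f a (act b i)) (f b i))
  & forall c', JMeq (f (gmul a b) i) (c' *: mcomp C (f a (act b i)) (f b i)) -> c' = c].
  have [u hu'] := hu i.
  have hK := hiso_comp (hf b i) (hf a (act b i)).
  move: (f (gmul a b) i) (gen (gmul a b) i).
  move: (act (gmul a b) i) (act_comp a b i) => j E; subst j => x gx.
  have [c [uc Ex]] := gen_unit S_simple hu' hK gx.
  exists c; split => //; first by rewrite Ex; exact: JMeq_refl.
  move=> c' jc; have Ec' := JMeq_eq jc.
  have [r [_ ur]] := rank1 S_simple hu' hK gx.1.
  by rewrite -(ur c') // -(ur c).
have [pv pvP] : exists pv : H -> H -> I -> R, forall a b i, [/\ pv a b i \is a GRing.unit,
    JMeq (f (gmul a b) i) (pv a b i *: mcomp C (f a (act b i)) (f b i))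
  & forall c', JMeq (f (gmul a b) i) (c' *: mcomp C (f a (act b i)) (f b i)) -> c' = pv a b i].
  exists (fun a b i => proj1_sig (constructive_indefinite_description _ (key a b i))).
  by move=> a b i; exact: (proj2_sig (constructive_indefinite_description _ (key a b i))).
have [idx idxP] : exists idx : H -> I, forall k, LS S (gmul (ginv (hr (idx k))) k).
  exists (fun k => proj1_sig (constructive_indefinite_description _ (hr_part k))).
  by move=> k; exact: (proj1 (proj2_sig (constructive_indefinite_description _ (hr_part k)))).
have idx_hr i : idx (hr i) = i.
  by apply: (hr_uniq (hr i)); [exact: idxP | rewrite gmulVx; exact: LS1].
have idx_mul k l : LS S l -> idx (gmul k l) = idx k.
  move=> hl; apply: (hr_uniq (gmul k l)); first exact: idxP.
  by rewrite gmulA; exact: LSM (idxP k) hl.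
have idx_act c k : idx (gmul c k) = act c (idx k).
  apply: (hr_uniq (gmul c k)); first exact: idxP.
  have := LSM (act_def c (idx k)) (idxP k).
  rewrite !gmulA mulgK; exact: id.
exists (fun a b k => pv a b (idx k)); split.
- move=> a b; split; first by move=> k l hl /=; rewrite idx_mul.
  by move=> k; have [] := pvP a b (idx k).
- by move=> a b i /=; rewrite idx_hr; have [] := pvP a b i.
- move=> psi' hpsi' Epsi' a b k /=.
  have [inv _] := hpsi' a b.
  rewrite -[k in LHS](mulKVg (hr (idx k)) k) inv; last exact: idxP.
  have [_ _ u] := pvP a b (idx k); apply: u; exact: Epsi'.
split.
- move=> h k /=; set i := idx k.
  have [_ _ u] := pvP gone h i; symmetry; apply: u.
  rewrite scale1r gmul1x; apply: JMeq_sym.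
  by apply: (JM_idl (T := T)); [exact: act1 | exact: f1].
- move=> h k /=; set i := idx k.
  have [_ _ u] := pvP h gone i; symmetry; apply: u.
  rewrite scale1r gmulx1; apply: JMeq_sym.
  by apply: (JM_idr (T := T) f); [exact: act1 | exact: f1].
move=> a b c k /=; rewrite idx_act; set i := idx k.
have [uB J1 _] := pvP (gmul a b) c i.
have [uD J2 _] := pvP a b (act c i).
have [uCc J3 _] := pvP a (gmul b c) i.
have [uA J4 _] := pvP b c i.
set A := pv b c i; set B := pv (gmul a b) c i; set Cc := pv a (gmul b c) i.
set D := pv a b (act c i).
set Tm := mcomp C (mcomp C (f a (act b (act c i))) (f b (act c i))) (f c i).
have K1 : JMeq (f (gmul (gmul a b) c) i) ((B * D) *: Tm).
  apply: JMeq_trans J1 _; rewrite /Tm -scalerA -(compZl (f c i) D).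
  apply: (JM_scale (T := T) (k := act (gmul a b) (act c i)) (k' := act a (act b (act c i)))); first exact: act_comp.
  by apply: (JM_comp (T := T) (j := act c i) (j' := act c i) (k := act (gmul a b) (act c i)) (k' := act a (act b (act c i)))); [by [] | exact: act_comp | exact: J2 | exact: JMeq_refl].
have K2 : JMeq (f (gmul a (gmul b c)) i) ((Cc * A) *: Tm).
  apply: JMeq_trans J3 _; rewrite /Tm -Defs.compA -scalerA -(compZr (f a (act b (act c i))) A).
  apply: (JM_scale (T := T) (k := act a (act (gmul b c) i)) (k' := act a (act b (act c i)))); first by rewrite act_comp.
  apply: (JM_comp (T := T) (j := act (gmul b c) i) (j' := act b (act c i)) (k := act a (act (gmul b c) i)) (k' := act a (act b (act c i)))); [exact: act_comp | by rewrite act_comp | | exact: J4].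
  exact: (JM_f f a (act_comp b c i)).
have K3 : JMeq ((B * D) *: Tm) ((Cc * A) *: Tm).
  apply: JMeq_trans (JMeq_sym K1) _; apply: JMeq_trans _ K2.
  by rewrite gmulA; exact: JMeq_refl.
have E := JMeq_eq K3.
have hTm := hiso_comp (hf c i) (hiso_comp (hf b (act c i)) (hf a (act b (act c i)))).
have [u hu'] := hu i.
have [r [_ ur]] := rank1 S_simple hu' hTm (hdZ (B * D) hTm.1).
have eq : B * D = Cc * A.
  by have e1 := ur _ erefl; have e2 := ur _ E; rewrite -e1 -e2.
have AC : A * Cc = B * D by rewrite mulrC eq.
by rewrite [A * _]mulrC -(mulrA _ A) AC mulKr // mulrV.
Qed.
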